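(* Let $P$ be a poset, $Q$ a finite poset and $r \ge 2$ an integer. Then the symmetry quotient $P/(Q,r)$ is layer-preserving: for every equivalence class $E \in P/(Q,r)$ and every $e \in E$, \[ \ell_{P/(Q,r)}(E) = \ell_P(e). \] In particular $\ell(P) = \ell(P \oslash_r Q)$.
   Context: For a poset $X$, $\ell(X)$ is the cardinality of a longest chain in $X$; the layer of $a \in X$ is $\ell_X(a) = \ell(J^-(a))$, where $J^-(a) = \{c \in X : c \le a\}$. A subset $A$ of a poset $X$ is maximally ordered in $X$ if $|\{(a,b)\in A\times A : a<b\}|$ is maximal among all subsets of $X$ of cardinality $|A|$. For $\sigma \in \mathrm{Aut}(P)$ let $\Sigma(\sigma)=\{a\in P:\sigma(a)\neq a\}$. $(Q,r)$-generators: $\sigma \in \mathrm{Aut}(P)$ is a $(Q,r)$-generator if there exist subsets $S_0,\dots,S_{r-1}\subset\Sigma(\sigma)$, each isomorphic to $Q$, which are smallest maximally ordered subsets of $\Sigma(\sigma)$ with $\sigma(S_i)=S_{(i+1)\bmod r}$, $\ell(S_i)=\ell(\Sigma(\sigma))$ for all $i$, and $\bigcup_i S_i=\Sigma(\sigma)$. Any two distinct $S_i,S_j$ are called $(Q,r)$-symmetric subsets. $(Q,r)$-symmetric elements: $a,b\in P$ are $(Q,r,0)$-symmetric if $a=b$; $(Q,r,1)$-symmetric if there are $(Q,r)$-symmetric subsets $A,B$ with $(Q,r)$-generator $\sigma$ such that $a\in A$ and $b=\sigma^q(a)\in B$ for some $1\le q<r$; for $n\ge2$, $(Q,r,n)$-symmetric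 if they are not $(Q,r,j)$-symmetric for any $j<n$ but there exist $c\in P$ and $j<n$ with $a$ $(Q,r,j)$-symmetric to $c$ and $c$ $(Q,r,n-j)$-symmetric to $b$. Elements are $(Q,r)$-symmetric if they are $(Q,r,n)$-symmetric for some $n\ge0$; this is an equivalence relation. $P/(Q,r)$ is the set of its equivalence classes, ordered by $E\le F$ iff there exist $e\in E$, $f\in F$ with $e\le f$. The retract $P\oslash_r Q$ is this quotient poset (up to isomorphism). *)

(* Defs.v *)
From Stdlib Require Import Relations.
From mathcomp Require Import all_boot all_order fingroup perm.
From mathcomp Require Import boolp.

Set Implicit Arguments.
Unset Strict Implicit.
Unset Printing Implicit Defensive.

Import Order.Theory.
Local Open Scope order_scope.

Definition is_chain (T : finType) (R : rel T) (C : {set T}) : bool :=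
  [forall x in C, forall y in C, R x y || R y x].

Definition ell (T : finType) (R : rel T) (X : {set T}) : nat :=
  \max_(C : {set T} | (C \subset X) && is_chain R C) #|C|.

Section PosetDefs.
Context {d : Order.disp_t} (P : finPOrderType d).

Definition le_P : rel P := fun a b => a <= b.

Definition Jdown (a : P) : {set P} := [set c | c <= a].

Definition layer (a : P) : nat := ell le_P (Jdown a).

Definition nord (A : {set P}) : nat :=
  #|[set p : P * P | [&& p.1 \in A, p.2 \in A & p.1 < p.2]]|.

Definition max_ordered (X A : {set P}) : Prop :=
  A \subset X /\ forall B : {set P}, B \subset X -> #|B| = #|A| -> (nord B <= nord A)%N.

Definition is_aut (s : {perm P}) : Prop := forall a b : P, (s a <= s b) = (a <= b).

Definition Sigma (s : {perm P}) : {set P} := [set a | s a != a].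

Definition iso_to {d' : Order.disp_t} (Q : finPOrderType d') (S : {set P}) : Prop :=
  exists f : Q -> P,
    [/\ injective f, f @: [set: Q] = S & forall x y : Q, (f x <= f y) = (x <= y)].

Definition smallest_max_ordered (s : {perm P}) (S : {set P}) : Prop :=
  [/\ max_ordered (Sigma s) S, ell le_P S = ell le_P (Sigma s) &
      forall T : {set P}, max_ordered (Sigma s) T -> ell le_P T = ell le_P (Sigma s) ->
        (#|S| <= #|T|)%N ].

Definition generator_family {d' : Order.disp_t} (Q : finPOrderType d') (r : nat)
    (s : {perm P}) (S : nat -> {set P}) : Prop :=
  [/\ is_aut s,
      (forall i, (i < r)%N -> S i \subset Sigma s /\ iso_to Q (S i)),
      (forall i, (i < r)%N -> smallest_max_ordered s (S i)),
      (forall i, (i < r)%N -> s @: S i = S ((i.+1) %% r)%N) &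
      \bigcup_(i < r) S i = Sigma s].

Definition is_generator {d' : Order.disp_t} (Q : finPOrderType d') (r : nat)
    (s : {perm P}) : Prop :=
  exists S, generator_family Q r s S.

Definition sym1 {d' : Order.disp_t} (Q : finPOrderType d') (r : nat) (a b : P) : Prop :=
  exists (s : {perm P}) (S : nat -> {set P}) (i j q : nat),
    [/\ generator_family Q r s S, [&& i < r, j < r & S i != S j]%N,
        a \in S i,
        (1 <= q < r)%N &
        b = (s ^+ q)%g a /\ b \in S j].

(* (Q,r)-symmetry: union over n of the (Q,r,n)-symmetries, i.e. the
   reflexive-transitive closure of (Q,r,1)-symmetry *)
Definition symQ {d' : Order.disp_t} (Q : finPOrderType d') (r : nat) : relation P :=
  clos_refl_trans P (sym1 Q r).

Definition sym_class {d' : Order.disp_t} (Q : finPOrderType d') (r : nat) (a : P)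
  : {set P} := [set b | `[< symQ Q r a b >]].

Definition quot {d' : Order.disp_t} (Q : finPOrderType d') (r : nat) : {set {set P}} :=
  [set sym_class Q r a | a : P].

Definition le_quot (E F : {set P}) : bool := [exists e in E, exists f in F, e <= f].

Definition layerQ {d' : Order.disp_t} (Q : finPOrderType d') (r : nat) (E : {set P})
  : nat := ell le_quot [set F in quot Q r | le_quot F E].

End PosetDefs.

(* Main.v *)
Require Import Defs.
From mathcomp Require Import all_boot all_order fingroup perm.
From mathcomp Require Import boolp.
From Stdlib Require Import Relations.

Set Implicit Arguments.
Unset Strict Implicit.
Unset Printing Implicit Defensive.

Section Helpers.
Import Order.Theory.
Local Open Scope order_scope.
Variables (d : Order.disp_t) (P : finPOrderType d).

Lemma ell_ub (T : finType) (R : rel T) (X C : {set T}) :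
  C \subset X -> is_chain R C -> (#|C| <= ell R X)%N.
Proof. move=> h1 h2; rewrite /ell; by apply: (@leq_bigmax_cond _ (fun C : {set T} => (C \subset X) && is_chain R C) (fun C => #|C|)); rewrite h1. Qed.

Lemma ell_lub (T : finType) (R : rel T) (X : {set T}) n :
  (forall C : {set T}, C \subset X -> is_chain R C -> (#|C| <= n)%N) -> (ell R X <= n)%N.
Proof. move=> h; rewrite /ell; apply/bigmax_leqP => C /andP[h1 h2]; exact: h. Qed.

Lemma ell_mono (T : finType) (R : rel T) (X Y : {set T}) :
  X \subset Y -> (ell R X <= ell R Y)%N.
Proof. move=> sXY; apply: ell_lub => C h1 h2; apply: ell_ub => //; exact: subset_trans sXY. Qed.

Lemma layer_ge1 (a : P) : (1 <= layer a)%N.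
Proof.
rewrite /layer -(cards1 a); apply: ell_ub.
  by rewrite sub1set inE.
by apply/forallP => x; apply/implyP; rewrite inE => /eqP->; apply/forallP => y; apply/implyP; rewrite inE => /eqP->; rewrite /le_P lexx.
Qed.

Lemma layer_le (a b : P) : a <= b -> (layer a <= layer b)%N.
Proof. move=> ab; apply: ell_mono; apply/subsetP => x; rewrite !inE => xa; exact: le_trans ab. Qed.

Lemma layer_lt (a b : P) : a < b -> (layer a < layer b)%N.
Proof.
move=> ab.
have : (layer a <= (layer b).-1)%N.
  apply: ell_lub => C sC chC.
  have gC : b \notin C.
    apply/negP => bC; move/subsetP: sC => /(_ _ bC); rewrite inE => ba.
    by move: (lt_le_trans ab ba); rewrite ltxx.
  have : (#|b |: C| <= layer b)%N.
    apply: ell_ub.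
      apply/subsetP => x; rewrite !inE => /orP[/eqP->|xC]; first by [].
      by move/subsetP: sC => /(_ _ xC); rewrite inE => xa; apply: le_trans xa (ltW ab).
    apply/forallP => x; apply/implyP; rewrite !inE => /orP[/eqP->|xC];
      apply/forallP => y; apply/implyP; rewrite !inE => /orP[/eqP->|yC]; rewrite /le_P.
    - by rewrite lexx.
    - move/subsetP: sC => /(_ _ yC); rewrite inE => ya.
      by rewrite (le_trans ya (ltW ab)) orbT.
    - move/subsetP: sC => /(_ _ xC); rewrite inE => xa.
      by rewrite (le_trans xa (ltW ab)).
    - by move/forallP: chC => /(_ x); rewrite xC /= => /forallP /(_ y); rewrite yC.
  by rewrite cardsU1 gC add1n => h; rewrite -ltnS (ltn_predK (layer_ge1 b)).
by move: (layer_ge1 b); case: (layer b) => // n _ /=; rewrite ltnS.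
Qed.

Lemma layer_iso (p : {perm P}) (a : P) :
  (forall x y : P, (p x <= p y) = (x <= y)) -> (layer a <= layer (p a))%N.
Proof.
move=> hp; apply: ell_lub => C sC chC.
rewrite -(card_imset C (@perm_inj _ p)); apply: ell_ub.
  apply/subsetP => x /imsetP[y yC ->]; move/subsetP: sC => /(_ _ yC).
  by rewrite !inE hp.
apply/forallP => x; apply/implyP => /imsetP[x' x'C ->].
apply/forallP => y; apply/implyP => /imsetP[y' y'C ->].
rewrite /le_P !hp.
by move/forallP: chC => /(_ x'); rewrite x'C /= => /forallP /(_ y'); rewrite y'C.
Qed.

Lemma layer_perm (p : {perm P}) (a : P) :
  (forall x y : P, (p x <= p y) = (x <= y)) -> layer (p a) = layer a.
Proof.
move=> hp; apply/eqP; rewrite eqn_leq layer_iso // andbT.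
have hq : forall x y : P, ((p^-1)%g x <= (p^-1)%g y) = (x <= y).
  by move=> x y; have := hp ((p^-1)%g x) ((p^-1)%g y); rewrite !permKV => <-.
by have := layer_iso (p a) hq; rewrite permK.
Qed.

Lemma aut_exp (s : {perm P}) q : is_aut s -> forall x y : P, ((s ^+ q)%g x <= (s ^+ q)%g y) = (x <= y).
Proof.
move=> hs; elim: q => [|q IH] x y; first by rewrite expg0 !perm1.
by rewrite expgSr !permM hs IH.
Qed.

Variables (d' : Order.disp_t) (Q : finPOrderType d') (r : nat).

Lemma sym1_layer (a b : P) : sym1 Q r a b -> layer a = layer b.
Proof.
move=> [s [S [i [j [q [[hs _ _ _ _] _ _ _ [-> _]]]]]]].
by rewrite layer_perm //; apply: aut_exp.
Qed.

Lemma symQ_layer (a b : P) : symQ Q r a b -> layer a = layer b.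
Proof.
elim => [x y /sym1_layer //| x //| x y z _ -> _ ->] //.
Qed.

Lemma gen_consec (s : {perm P}) (S : nat -> {set P}) i j :
  generator_family Q r s S -> (i < r)%N -> (j < r)%N -> S i != S j ->
  forall k, (k < r)%N -> S k != S ((k.+1) %% r).
Proof.
move=> [_ _ _ hrot _] ir jr nij k kr; apply/negP => /eqP ek.
have hall : forall m, S ((k + m) %% r) = S k.
  elim => [|m IH]; first by rewrite addn0 modn_small.
  have hm : ((k + m) %% r < r)%N by rewrite ltn_mod; case: (r) kr.
  have e1 := hrot _ hm; rewrite IH in e1.
  have e2 := hrot _ kr.
  have -> : (k + m.+1) %% r = ((k + m) %% r).+1 %% r.
    by rewrite -[((k + m) %% r).+1]addn1 modnDml addn1 addnS.
  by rewrite -e1 e2 -ek.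
have hi : forall t, (t < r)%N -> S t = S k.
  move=> t tr; rewrite -(hall (t + r - k)).
  by rewrite addnBA ?(leq_trans (ltnW kr)) ?leq_addl // addnC addnK modnDr modn_small.
by move/eqP: nij; apply; rewrite hi // hi.
Qed.

Lemma gen_step (s : {perm P}) (S : nat -> {set P}) i j k x :
  (2 <= r)%N -> generator_family Q r s S -> (i < r)%N -> (j < r)%N -> S i != S j ->
  (k < r)%N -> x \in S k -> sym1 Q r x (s x) /\ s x \in S ((k.+1) %% r).
Proof.
move=> r2 gf ir jr nij kr xk.
have sx : s x \in S ((k.+1) %% r).
  by case: gf => [_ _ _ hrot _]; rewrite -(hrot _ kr); apply: imset_f.
split=> //.
exists s, S, k, ((k.+1) %% r), 1%N; split => //.
by rewrite kr ltn_mod (gen_consec gf ir jr nij kr) andbT; case: (r) kr.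
Qed.

Lemma gen_iter (s : {perm P}) (S : nat -> {set P}) i j :
  (2 <= r)%N -> generator_family Q r s S -> (i < r)%N -> (j < r)%N -> S i != S j ->
  forall m k x, (k < r)%N -> x \in S k -> symQ Q r x ((s ^+ m)%g x).
Proof.
move=> r2 gf ir jr nij; elim => [|m IH] k x kr xk.
  by rewrite expg0 perm1; apply: rt_refl.
have [h1 h2] := gen_step r2 gf ir jr nij kr xk.
rewrite expgS permM; apply: rt_trans (rt_step _ _ _ _ h1) _.
apply: IH h2; rewrite ltn_mod; case: (r) kr => //.
Qed.

Lemma sym1_sym (a b : P) : (2 <= r)%N -> sym1 Q r a b -> symQ Q r b a.
Proof.
move=> r2 [s [S [i [j [q [gf /and3P[ir jr nij] ai _ [-> bj]]]]]]].
set n := #[s]%g.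
have ea : a = ((s ^+ (q * n.-1)) ((s ^+ q) a))%g.
  rewrite -permM -expgD.
  have -> : (q + q * n.-1 = n * q)%N.
    by rewrite -{1}(muln1 q) -mulnDr add1n prednK ?order_gt0 // mulnC.
  by rewrite expgM expg_order expg1n perm1.
rewrite {2}ea.
exact: (gen_iter r2 gf ir jr nij _ jr bj).
Qed.

Lemma symQ_sym (a b : P) : (2 <= r)%N -> symQ Q r a b -> symQ Q r b a.
Proof.
move=> r2; elim => [x y /(sym1_sym r2) //| x | x y z _ h1 _ h2].
- exact: rt_refl.
- exact: rt_trans h2 h1.
Qed.

Lemma mem_cls (a b : P) : b \in sym_class Q r a -> symQ Q r a b.
Proof. by rewrite inE => /asboolP. Qed.

Lemma cls_mem (a b : P) : symQ Q r a b -> b \in sym_class Q r a.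
Proof. by move=> h; rewrite inE; apply/asboolP. Qed.

Lemma cls_self (a : P) : a \in sym_class Q r a.
Proof. by apply: cls_mem; apply: rt_refl. Qed.

Lemma cls_eq (a x : P) : (2 <= r)%N -> x \in sym_class Q r a -> sym_class Q r a = sym_class Q r x.
Proof.
move=> r2 /mem_cls hx; apply/setP => y; apply/idP/idP => /mem_cls h; apply: cls_mem.
- exact: rt_trans (symQ_sym r2 hx) h.
- exact: rt_trans hx h.
Qed.

Lemma quot_cls (F : {set P}) x : (2 <= r)%N -> F \in quot P Q r -> x \in F -> F = sym_class Q r x.
Proof. by move=> r2 /imsetP[a _ ->] xa; apply: cls_eq. Qed.

Lemma quot_layer (F : {set P}) x y : (2 <= r)%N -> F \in quot P Q r -> x \in F -> y \in F -> layer x = layer y.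
Proof.
move=> r2 FQ xF yF; move: yF; rewrite (quot_cls r2 FQ xF) => /mem_cls; exact: symQ_layer.
Qed.

Definition hl (F : {set P}) : nat := \max_(x in F) layer x.

Lemma hl_eq (F : {set P}) x : (2 <= r)%N -> F \in quot P Q r -> x \in F -> hl F = layer x.
Proof.
move=> r2 FQ xF; apply/eqP; rewrite eqn_leq; apply/andP; split.
- by apply/bigmax_leqP => y yF; rewrite (quot_layer r2 FQ yF xF).
- by rewrite /hl (bigD1 x xF) /= leq_maxl.
Qed.

Lemma hl_inj (F G : {set P}) : (2 <= r)%N -> F \in quot P Q r -> G \in quot P Q r ->
  le_quot F G -> hl F = hl G -> F = G.
Proof.
move=> r2 FQ GQ /existsP[f /andP[fF /existsP[g /andP[gG fg]]]].
rewrite (hl_eq r2 FQ fF) (hl_eq r2 GQ gG) => e.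
case: (eqVneq f g) => [efg|nfg].
  by rewrite (quot_cls r2 FQ fF) (quot_cls r2 GQ gG) efg.
have : f < g by rewrite lt_neqAle nfg fg.
by move/layer_lt; rewrite e ltnn.
Qed.

Lemma key (K : {set {set P}}) N : (2 <= r)%N -> K \subset quot P Q r -> is_chain (@le_quot d P) K ->
  (forall F, F \in K -> exists2 x, x \in F & (layer x <= N)%N) -> (#|K| <= N)%N.
Proof.
move=> r2 sK chK hK.
have inj : {in enum K &, injective hl}.
  move=> F G; rewrite !mem_enum => FK GK e.
  have FQ := subsetP sK _ FK; have GQ := subsetP sK _ GK.
  move/forallP: chK => /(_ F); rewrite FK /= => /forallP /(_ G); rewrite GK /= => /orP[h|h].
  - exact: hl_inj.
  - by apply/esym; apply: hl_inj.
have u : uniq (map hl (enum K)) by rewrite (map_inj_in_uniq inj) enum_uniq.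
rewrite cardE -(size_map hl) -(size_iota 1 N); apply: uniq_leq_size => // v /mapP[F].
rewrite mem_enum => FK ->; have [x xF lx] := hK F FK.
rewrite (hl_eq r2 (subsetP sK _ FK) xF) mem_iota layer_ge1 /= add1n ltnS //.
Qed.

Lemma chain_img (C : {set P}) : (2 <= r)%N -> is_chain (@le_P d P) C ->
  {in C &, injective (sym_class Q r)} /\ is_chain (@le_quot d P) [set sym_class Q r c | c in C].
Proof.
move=> r2 chC; split.
  move=> c c' cC c'C e.
  have l : layer c = layer c' by apply: symQ_layer; apply: mem_cls; rewrite e cls_self.
  case: (eqVneq c c') => // ne.
  move/forallP: chC => /(_ c); rewrite cC /= => /forallP /(_ c'); rewrite c'C /= /le_P => /orP[h|h].
  - have lt : c < c' by rewrite lt_neqAle ne h.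
    by have := layer_lt lt; rewrite l ltnn.
  - have lt : c' < c by rewrite lt_neqAle eq_sym ne h.
    by have := layer_lt lt; rewrite l ltnn.
apply/forallP => X; apply/implyP => /imsetP[c cC ->].
apply/forallP => Y; apply/implyP => /imsetP[c' c'C ->].
move/forallP: chC => /(_ c); rewrite cC /= => /forallP /(_ c'); rewrite c'C /= /le_P => /orP[h|h].
- apply/orP; left; apply/existsP; exists c; rewrite cls_self /=; apply/existsP; exists c'; by rewrite cls_self.
- apply/orP; right; apply/existsP; exists c'; rewrite cls_self /=; apply/existsP; exists c; by rewrite cls_self.
Qed.

End Helpers.

Theorem mainTheorem3 (d : Order.disp_t) (P : finPOrderType d)
    (d' : Order.disp_t) (Q : finPOrderType d') (r : nat) :
  (2 <= r)%N ->
  (forall E : {set P}, E \in quot P Q r ->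
     forall e : P, e \in E -> layerQ Q r E = layer e)
  /\ ell (@le_P d P) [set: P] = ell (@le_quot d P) (quot P Q r).
Proof.
move=> r2; split.
  move=> E EQ e eE; have Ee := quot_cls r2 EQ eE.
  rewrite /layerQ; apply/eqP; rewrite eqn_leq; apply/andP; split.
    apply: ell_lub => K sK chK; apply: (@key d P d' Q r) => //.
      by apply/subsetP => F /(subsetP sK); rewrite inE => /andP[].
    move=> F /(subsetP sK); rewrite inE => /andP[FQ /existsP[f /andP[fF /existsP[g /andP[gE fg]]]]].
    exists f => //; rewrite (quot_layer r2 EQ eE gE); exact: layer_le.
  apply: ell_lub => C sC chC; have [inj ch] := chain_img Q r2 chC.
  rewrite -(card_in_imset inj); apply: ell_ub => //.
  apply/subsetP => X /imsetP[c cC ->]; rewrite inE; apply/andP; split.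
    by apply/imsetP; exists c.
  apply/existsP; exists c; rewrite cls_self /=; apply/existsP; exists e; rewrite eE /=.
  by move/subsetP: sC => /(_ _ cC); rewrite inE.
apply/eqP; rewrite eqn_leq; apply/andP; split.
  apply: ell_lub => C sC chC; have [inj ch] := chain_img Q r2 chC.
  rewrite -(card_in_imset inj); apply: ell_ub => //.
  by apply/subsetP => X /imsetP[c cC ->]; apply/imsetP; exists c.
apply: ell_lub => K sK chK; apply: (@key d P d' Q r) => // F FK.
have /imsetP[a _ ->] := subsetP sK _ FK.
by exists a; [apply: cls_self | apply: ell_mono; apply: subsetT].
Qed.
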